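(* Let $1<\alpha<2$ and $\beta\geq 1$ with $\alpha-\beta+1>0$, and let $\tau>0$. Assume that $A$ is a closed linear operator on a Banach space $X$ which is $\omega$-sectorial of angle $\frac{(\alpha-1)\pi}{2}$ for some $\omega<0$. Then $A$ generates a discrete $(\alpha,\beta)$-resolvent family $\{S_{\alpha,\beta}^n\}_{n\in\mathbb{N}_0}\subset\mathcal{B}(X)$.
   Context: Fix a step size $\tau>0$. For $\gamma>0$ and $n\in\mathbb{N}_0$ let $k_\tau^\gamma(n):=\frac{\tau^{\gamma-1}\Gamma(\gamma+n)}{\Gamma(\gamma)\Gamma(n+1)}$. For $\alpha,\beta>0$, a sequence $\{S_{\alpha,\beta}^n\}_{n\in\mathbb{N}_0}\subset\mathcal{B}(X)$ is called a discrete $(\alpha,\beta)$-resolvent family generated by the closed operator $A:D(A)\subset X\to X$ if (1) $S^n_{\alpha,\beta}x\in D(A)$ for all $x\in X$, $n\in\mathbb N_0$, and $AS_{\alpha,\beta}^nx=S_{\alpha,\beta}^nAx$ for all $x\in D(A)$, $n\in\mathbb{N}_0$; (2) for every $x\in X$ and $n\in\mathbb{N}_0$, $S_{\alpha,\beta}^nx=k^\beta_\tau(n)x+\tau A\sum_{j=0}^n k^\alpha_\tau(n-j)S_{\alpha,\beta}^jx$. An operator $A$ is $\omega$-sectorial of angle $\theta$ (with $\theta\in[0,\pi/2)$, $\omega\in\mathbb R$) if its resolvent exists on $\omega+\Sigma_\theta:=\{\omega+\lambda:\lambda\in\mathbb C\setminus\{0\},\ |\arg\lambda|<\frac{\pi}{2}+\theta\}$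 and there is $M>0$ with $\|(\lambda-A)^{-1}\|\le \frac{M}{|\lambda-\omega|}$ for all $\lambda\in\omega+\Sigma_\theta$. *)

(* Defs.v *)
From HB Require Import structures.
From mathcomp Require Import all_boot all_order all_algebra.
From mathcomp Require Import all_classical all_reals all_analysis.
From mathcomp Require Import complex.

Set Implicit Arguments.
Unset Strict Implicit.
Unset Printing Implicit Defensive.

Import Order.TTheory GRing.Theory Num.Theory.
Import numFieldNormedType.Exports.
Local Open Scope classical_set_scope.
Local Open Scope ring_scope.
Local Open Scope complex_scope.

Definition Gamma {R : realType} (x : R) : R :=
  Rintegral (@lebesgue_measure R) `]0%R, +oo[
    (fun t : R => t `^ (x - 1) * expR (- t)).

Definition kfun {R : realType} (tau g : R) (n : nat) : R :=
  tau `^ (g - 1) * Gamma (g + n%:R) / (Gamma g * Gamma (n%:R + 1)).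

Definition bounded_op {R : realType} {X : normedModType R[i]} (T : X -> X) : Prop :=
  (forall (a : R[i]) (x y : X), T (a *: x + y) = a *: T x + T y) /\ continuous T.

(* A : D(A) ⊂ X -> X is a closed linear operator (values of A outside D are irrelevant) *)
Definition closed_operator {R : realType} {X : normedModType R[i]}
    (D : set X) (A : X -> X) : Prop :=
  [/\ D 0,
      (forall (a : R[i]) (x y : X), D x -> D y -> D (a *: x + y)),
      (forall (a : R[i]) (x y : X), D x -> D y -> A (a *: x + y) = a *: A x + A y)
    & closed [set p : X * X | D p.1 /\ p.2 = A p.1]].

Definition is_resolvent {R : realType} {X : normedModType R[i]}
    (D : set X) (A : X -> X) (l : R[i]) (Rl : X -> X) : Prop :=
  [/\ bounded_op Rl,
      (forall x, D (Rl x) /\ l *: Rl x - A (Rl x) = x)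
    & (forall x, D x -> Rl (l *: x - A x) = x)].

Definition sector {R : realType} (omega theta : R) (l : R[i]) : Prop :=
  exists mu : R[i], l = omega%:C + mu /\ mu != 0 /\
    exists r t : R, 0 < r /\ `|t| < pi / 2 + theta /\
      mu = (r * cos t) +i* (r * sin t).

Definition sectorial {R : realType} {X : normedModType R[i]}
    (D : set X) (A : X -> X) (omega theta : R) : Prop :=
  (forall l, sector omega theta l -> exists Rl, is_resolvent D A l Rl) /\
  exists M : R, 0 < M /\
    forall l, sector omega theta l -> forall Rl, is_resolvent D A l Rl ->
      forall x : X, `|Rl x| <= (M%:C / `|l - omega%:C|) * `|x|.

Definition discrete_resolvent_family {R : realType} {X : normedModType R[i]}
    (tau alpha beta : R) (D : set X) (A : X -> X) (S : nat -> X -> X) : Prop :=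
  [/\ (forall n, bounded_op (S n)),
      (forall n x, D (S n x)),
      (forall n x, D x -> A (S n x) = S n (A x))
    & (forall n x, S n x = (kfun tau beta n)%:C *: x
          + tau%:C *: A (\sum_(j < n.+1) (kfun tau alpha (n - j))%:C *: S j x))].

(* Main.v *)
Require Import Defs.
From HB Require Import structures.
From mathcomp Require Import all_boot all_order all_algebra.
From mathcomp Require Import all_classical all_reals all_analysis.
From mathcomp Require Import complex.
From mathcomp Require Import ring lra.
From mathcomp Require Import measurable_realfun exponential_distribution.
Import Order.TTheory GRing.Theory Num.Theory.
Import numFieldNormedType.Exports.
Local Open Scope classical_set_scope.
Local Open Scope ring_scope.

Lemma powR_bound (R : realType) (s t : R) : 0 <= s <= 1 -> 0 < t -> t `^ s <= 1 + t.
Proof.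
case/andP=> s0 s1 t0.
have [t1|t1] := leP t 1.
  apply: (le_trans (y := 1)); last by rewrite lerDl ltW.
  by rewrite -(powRr0 t); apply: ger_powR => //; rewrite t0 t1.
apply: (le_trans (y := t)); last by rewrite lerDr.
by apply: ler1_powR => //; rewrite ltW.
Qed.

Lemma Gamma_gt0 (R : realType) (x : R) : 1 <= x <= 2 -> 0 < Gamma x.
Proof.
case/andP => x1 x2.
have s0 : 0 <= x - 1 by rewrite subr_ge0.
have s1 : x - 1 <= 1 by rewrite lerBlDr.
set s := x - 1 in s0 s1 *.
rewrite /Gamma /Rintegral -/s; apply: fine_gt0; apply/andP; split.
- have mf : measurable_fun setT (fun t : R => t `^ s * expR (- t)).
    apply: measurable_funM; first exact: measurable_powR.
    apply: measurableT_comp; first exact: measurable_expR.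
    exact: measurable_funN.
  apply: (@lt_le_trans _ _ (\int[lebesgue_measure]_(t in `[1%R, 2%R]) (expR (-2) : R)%:E)%E).
    rewrite integral_cst //= lebesgue_measure_itv /=.
    rewrite lte_fin ltr1n /= -EFinD -EFinM lte_fin.
    by rewrite mulr_gt0 ?expR_gt0 // subr_gt0 ltr1n.
  apply: (@le_trans _ _ (\int[lebesgue_measure]_(t in `[1%R, 2%R]) (t `^ s * expR (- t))%:E)%E).
    apply: ge0_le_integral.
    + by [].
    + by move=> t _; rewrite lee_fin expR_ge0.
    + by [].
    + apply/measurable_EFinP; apply: measurable_funTS; exact: mf.
    + move=> t; rewrite /= in_itv /= => /andP[t1 t2]; rewrite lee_fin.
      rewrite -[X in X <= _]mul1r ler_pM ?expR_ge0 //.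
        by rewrite -(powRr0 t); apply: ler_powR.
      by rewrite ler_expR lerN2.
  apply: ge0_subset_integral => //.
  + apply/measurable_EFinP; apply: measurable_funTS; exact: mf.
  + by move=> t _; rewrite lee_fin mulr_ge0 ?powR_ge0 ?expR_ge0.
  + move=> t; rewrite /= !in_itv /= => /andP[t1 _]; rewrite andbT.
    by apply: lt_le_trans t1.
- have mf : measurable_fun setT (fun t : R => t `^ s * expR (- t)).
    apply: measurable_funM; first exact: measurable_powR.
    apply: measurableT_comp; first exact: measurable_expR.
    exact: measurable_funN.
  have mp : measurable_fun setT (fun t : R => 4 * exponential_pdf (2^-1) t).
    apply: measurable_funM => //; exact: measurable_exponential_pdf.
  have p0 : forall t, (0 <= 4 * exponential_pdf (2^-1 : R) t)%R.
    by move=> t; rewrite mulr_ge0 // exponential_pdf_ge0.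
  apply: (@le_lt_trans _ _ (\int[lebesgue_measure]_(t in `]0%R, +oo[) (4 * exponential_pdf (2^-1) t)%:E)%E).
    apply: ge0_le_integral.
    + by [].
    + by move=> t _; rewrite lee_fin mulr_ge0 ?powR_ge0 ?expR_ge0.
    + apply/measurable_EFinP; apply: measurable_funTS; exact: mf.
    + apply/measurable_EFinP; apply: measurable_funTS; exact: mp.
    move=> t; rewrite /= in_itv /= andbT => t0; rewrite lee_fin.
    rewrite exponential_pdfE; last exact: ltW.
    have -> : (4 * (2^-1 * expR (- 2^-1 * t)) = (2 * expR (t / 2)) * expR (- t) :> R).
      rewrite -mulrA -expRD mulrA; congr (_ * _).
        by field.
      by congr expR; field.
    rewrite (ler_pM2r (expR_gt0 (- t))).
    apply: (le_trans (@powR_bound _ s t _ t0)); first by rewrite s0 s1.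
    apply: (le_trans (y := 2 * (1 + t / 2))).
      by rewrite mulrDr mulr1 mulrCA divff ?mulr1 // ?lerD2r ?ler1n ?pnatr_eq0.
    by rewrite ler_pM2l ?ltr0n // expR_ge1Dx.
  apply: (@le_lt_trans _ _ (\int[lebesgue_measure]_t (4 * exponential_pdf (2^-1) t)%:E)%E).
    apply: ge0_subset_integral => //.
    + exact/measurable_EFinP.
    + by move=> t _; rewrite lee_fin.
  under eq_integral do rewrite EFinM.
  rewrite ge0_integralZl_EFin //.
  + by rewrite integral_exponential_pdf ?invr_gt0 ?ltr0n // mule1 ltry.
  + by move=> t _; rewrite lee_fin exponential_pdf_ge0 // invr_ge0 ler0n.
  + by apply/measurable_EFinP; exact: measurable_exponential_pdf.
Qed.

Section Constr.
Variables (R : realType) (X : normedModType R[i]) (D : set X) (A : X -> X) (Rl : X -> X).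
Variables (lam t : R[i]) (kb ka : nat -> R[i]).
Hypothesis HD0 : D 0.
Hypothesis HDl : forall (a : R[i]) (x y : X), D x -> D y -> D (a *: x + y).
Hypothesis HAl : forall (a : R[i]) (x y : X), D x -> D y -> A (a *: x + y) = a *: A x + A y.
Hypothesis HRl : forall (a : R[i]) (x y : X), Rl (a *: x + y) = a *: Rl x + Rl y.
Hypothesis HRlc : continuous Rl.
Hypothesis HRlD : forall x, D (Rl x).
Hypothesis HRlA : forall x, lam *: Rl x - A (Rl x) = x.
Hypothesis HRlA2 : forall x, D x -> Rl (lam *: x - A x) = x.
Hypothesis Hlam : lam * (t * ka 0) = 1.

Lemma A0 : A 0 = 0.
Proof.
have := HAl 1 0 0 HD0 HD0; rewrite !scale1r addr0 => h.
by apply: (addrI (A 0)); rewrite addr0 -h.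
Qed.

Lemma DZ a x : D x -> D (a *: x).
Proof. by move=> Dx; have := HDl a x 0 Dx HD0; rewrite addr0. Qed.
Lemma AZ a x : D x -> A (a *: x) = a *: A x.
Proof. by move=> Dx; have := HAl a x 0 Dx HD0; rewrite addr0 A0 addr0. Qed.
Lemma DD x y : D x -> D y -> D (x + y).
Proof. by move=> Dx Dy; have := HDl 1 x y Dx Dy; rewrite scale1r. Qed.
Lemma AD x y : D x -> D y -> A (x + y) = A x + A y.
Proof. by move=> Dx Dy; have := HAl 1 x y Dx Dy; rewrite !scale1r. Qed.

Lemma Dsum n (F : 'I_n -> X) : (forall i, D (F i)) ->
  D (\sum_(i < n) F i) /\ A (\sum_(i < n) F i) = \sum_(i < n) A (F i).
Proof.
elim: n F => [|n IH] F HF; first by rewrite !big_ord0 A0.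
have [IH1 IH2] := IH (fun i => F (widen_ord (leqnSn n) i)) (fun i => HF _).
rewrite !big_ord_recr /=; split; first exact: DD.
by rewrite AD // IH2.
Qed.

Lemma Rl0 : Rl 0 = 0.
Proof.
have := HRl 1 0 0; rewrite !scale1r addr0 => h.
by apply: (addrI (Rl 0)); rewrite addr0 -h.
Qed.
Lemma RlZ a x : Rl (a *: x) = a *: Rl x.
Proof. by have := HRl a x 0; rewrite !addr0 Rl0 addr0. Qed.
Lemma RlD x y : Rl (x + y) = Rl x + Rl y.
Proof. by have := HRl 1 x y; rewrite !scale1r. Qed.
Lemma RlN x : Rl (- x) = - Rl x.
Proof. by rewrite -scaleN1r RlZ scaleN1r. Qed.
Lemma RlA x : D x -> Rl (A x) = A (Rl x).
Proof.
move=> Dx; have := HRlA2 x Dx; rewrite RlD RlN RlZ => h.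
have h2 := HRlA x.
by apply: oppr_inj; apply: (addrI (lam *: Rl x)); rewrite h h2.
Qed.

Definition step m (F : nat -> X -> X) : X -> X := fun x =>
  lam *: Rl (kb m *: x + t *: \sum_(j < m) ka (m - j) *: A (F j x)).

Fixpoint G m : nat -> X -> X :=
  match m with
  | 0 => fun _ _ => 0
  | m'.+1 => fun j => if (j < m')%N then G m' j else step m' (G m')
  end.

Lemma G_stable {m j} : (j < m)%N -> G m j = G j.+1 j.
Proof.
elim: m j => [//|m IH] j; rewrite ltnS leq_eqVlt => /orP[/eqP ->|jm] /=.
  by rewrite ltnn.
by rewrite jm IH.
Qed.

Definition S n := G n.+1 n.

Definition y n x := kb n *: x + t *: \sum_(j < n) ka (n - j) *: A (S j x).

Lemma S_eq n x : S n x = lam *: Rl (y n x).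
Proof.
rewrite /S /= ltnn /step /y; congr (_ *: Rl (_ + _ *: _)).
by apply: eq_bigr => j _; rewrite (G_stable (ltn_ord j)).
Qed.

Lemma SD n x : D (S n x).
Proof. by rewrite S_eq; apply: DZ. Qed.

Lemma AS n x : A (S n x) = lam *: S n x - lam *: y n x.
Proof.
rewrite S_eq AZ //; have h := HRlA (y n x).
by rewrite -scalerBr; congr (_ *: _); apply/eqP; rewrite eq_sym subr_eq addrC -subr_eq h.
Qed.

Lemma S_rec n x : S n x = kb n *: x
   + t *: A (\sum_(j < n.+1) ka (n - j) *: S j x).
Proof.
have [_ ->] := @Dsum n.+1 (fun j : 'I_n.+1 => ka (n - j) *: S j x) (fun j => DZ _ _ (SD _ _)).
rewrite big_ord_recr /= subnn (AZ (ka 0) (S n x) (SD n x)) AS.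
under eq_bigr => i _ do rewrite (AZ _ _ (SD i x)).
rewrite scalerDr addrA -[kb n *: x + _]/(y n x) -scalerBr !scalerA.
rewrite mulrC Hlam scale1r.
by rewrite addrCA subrr addr0.
Qed.

Lemma SlinA n a x z : S n (a *: x + z) = a *: S n x + S n z.
Proof.
elim/ltn_ind: n a x z => n IH a x z.
have hy : y n (a *: x + z) = a *: y n x + y n z.
  rewrite /y.
  under eq_bigr => j _ do rewrite (IH j (ltn_ord j)) (HAl _ _ _ (SD _ _) (SD _ _)) scalerDr scalerA mulrC -scalerA.
  rewrite big_split /= -scaler_sumr !scalerDr !scalerA [kb n * a]mulrC [t * a]mulrC -!scalerA.
  by rewrite addrACA.
by rewrite !S_eq hy RlD RlZ scalerDr !scalerA mulrC.
Qed.

Lemma cZ (k : R[i]) (f : X -> X) : continuous f -> continuous (fun x => k *: f x).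
Proof. by move=> cf x; apply: continuousZ; [exact: cst_continuous | exact: cf]. Qed.
Lemma cD (f g : X -> X) : continuous f -> continuous g -> continuous (fun x => f x + g x).
Proof. by move=> cf cg x; exact: (@continuousD _ _ _ f g x (cf x) (cg x)). Qed.
Lemma cId : continuous (fun x : X => x).
Proof. by move=> x; exact: cvg_id. Qed.
Lemma csum n (F : 'I_n -> X -> X) : (forall i, continuous (F i)) ->
  continuous (fun x => \sum_(i < n) F i x).
Proof.
elim: n F => [|n IH] F HF.
  have -> : (fun x : X => \sum_(i < 0) F i x) = fun _ => 0.
    by apply: funext => x; rewrite big_ord0.
  by move=> x; exact: cst_continuous.
have -> : (fun x : X => \sum_(i < n.+1) F i x) =
   fun x => \sum_(i < n) F (widen_ord (leqnSn n) i) x + F ord_max x.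
  by apply: funext => x; rewrite big_ord_recr.
by apply: cD; [apply: IH => i; exact: HF | exact: HF].
Qed.

Lemma S_cont n : continuous (S n) /\ continuous (fun x => A (S n x)).
Proof.
elim/ltn_ind: n => n IH.
have cy : continuous (y n).
  rewrite /y; apply: cD; first by apply: cZ; exact: cId.
  apply: cZ; apply: csum => i; apply: cZ; exact: (IH i (ltn_ord i)).2.
have cS : continuous (S n).
  have -> : S n = fun x => lam *: Rl (y n x) by apply: funext => x; exact: S_eq.
  by apply: cZ => x; apply: continuous_comp; [exact: cy | exact: HRlc].
split => //.
have -> : (fun x => A (S n x)) = fun x => lam *: S n x - lam *: y n x.
  by apply: funext => x; exact: AS.
apply: (@cD (fun x => lam *: S n x) (fun x => - (lam *: y n x))); first exact: cZ.
move=> z; apply: (@continuousN _ _ _ (fun x => lam *: y n x)). exact (@cZ lam (y n) cy z).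
Qed.

Lemma S_comm n x : D x -> A (S n x) = S n (A x).
Proof.
elim/ltn_ind: n x => n IH x Dx.
have DAS : forall j : 'I_n, D (A (S j x)) by move=> j; rewrite (IH j (ltn_ord j) x Dx); exact: SD.
have Dsm := @Dsum n (fun j : 'I_n => ka (n - j) *: A (S j x)) (fun j => DZ _ _ (DAS j)).
have Dy : D (y n x) by apply: DD; [exact: DZ | apply: DZ; exact: Dsm.1].
have hy : y n (A x) = A (y n x).
  rewrite /y AD; [|exact: DZ|apply: DZ; exact: Dsm.1].
  rewrite AZ // AZ; last exact: Dsm.1.
  rewrite Dsm.2; congr (_ + _ *: _); apply: eq_bigr => j _.
  by rewrite AZ // (IH j (ltn_ord j) x Dx).
by rewrite !S_eq hy RlA // AZ.
Qed.

Lemma family : exists S' : nat -> X -> X,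
  [/\ (forall n, (forall a x z, S' n (a *: x + z) = a *: S' n x + S' n z) /\ continuous (S' n)),
      (forall n x, D (S' n x)),
      (forall n x, D x -> A (S' n x) = S' n (A x))
    & (forall n x, S' n x = kb n *: x + t *: A (\sum_(j < n.+1) ka (n - j) *: S' j x))].
Proof.
exists S; split.
- by move=> n; split; [exact: SlinA | exact: (S_cont n).1].
- exact: SD.
- exact: S_comm.
- exact: S_rec.
Qed.
End Constr.

Local Open Scope complex_scope.

Theorem theorem3p5 (R : realType) (X : completeNormedModType R[i])
    (alpha beta tau omega : R) (D : set X) (A : X -> X) :
  1 < alpha -> alpha < 2 -> 1 <= beta -> 0 < alpha - beta + 1 -> 0 < tau ->
  closed_operator D A ->
  omega < 0 ->
  sectorial D A omega ((alpha - 1) * pi / 2) ->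
  exists S : nat -> X -> X, discrete_resolvent_family tau alpha beta D A S.
Proof.
move=> a1 a2 b1 ab tau0 [HD0 HDl HAl _] om0 [Hres _].
set c := kfun tau alpha 0.
have c0 : 0 < c.
  rewrite /c /kfun mulr0n addr0 add0r.
  rewrite divr_gt0 ?mulr_gt0 ?powR_gt0 ?Gamma_gt0 //.
  - by rewrite (ltW a1) (ltW a2).
  - by rewrite (ltW a1) (ltW a2).
  - by rewrite lexx ler1n.
set lr := (tau * c)^-1.
have lr0 : 0 < lr by rewrite invr_gt0 mulr_gt0.
have Hsec : sector omega ((alpha - 1) * pi / 2) lr%:C.
  exists ((lr - omega) +i* 0); split.
    by apply/eqP; rewrite eq_complex /= addr0 subrKC !eqxx.
  split.
    apply/negP; rewrite eq_complex /= eqxx andbT.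
    by rewrite gt_eqF // subr_gt0 (lt_trans om0).
  exists (lr - omega), 0; split; first by rewrite subr_gt0 (lt_trans om0).
  split; last by rewrite cos0 sin0 mulr1 mulr0.
  rewrite normr0 addr_gt0 // ?divr_gt0 ?mulr_gt0 ?pi_gt0 ?ltr0n ?subr_gt0 //.
have [Rl [[Rlin Rlc] HR1 HR2]] := Hres _ Hsec.
have := @family _ X D A Rl lr%:C tau%:C (fun n => (kfun tau beta n)%:C)
  (fun n => (kfun tau alpha n)%:C) HD0 HDl HAl Rlin Rlc
  (fun x => (HR1 x).1) (fun x => (HR1 x).2) HR2.
case.
  rewrite -!rmorphM /= -/c mulVf ?rmorph1 //.
  by rewrite gt_eqF // mulr_gt0.
move=> S' [h1 h2 h3 h4]; exists S'; split => //.
Qed.
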